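(* Let $L\ge1$, $N=4^L$, and positive integers $M,r_0,\ldots,r_{L-1}$. For weights $\mathbf{a}^{0,\gamma}\in\mathbb{R}^M$ ($\gamma\in[r_0]$), $\mathbf{a}^{l,\gamma}\in\mathbb{R}^{r_{l-1}}$ ($l\in[L-1]$, $\gamma\in[r_l]$) and $\mathbf{a}^{L,y}\in\mathbb{R}^{r_{L-1}}$, define $\phi^{0,\gamma}:=\mathbf{a}^{0,\gamma}$, $$\phi^{l,\gamma}:=\sum_{\alpha=1}^{r_{l-1}}a^{l,\gamma}_\alpha\cdot\phi^{l-1,\alpha}\otimes\phi^{l-1,\alpha}\otimes\phi^{l-1,\alpha}\otimes\phi^{l-1,\alpha}\quad(l\in[L-1],\ \gamma\in[r_l]),$$ $$\mathcal{A}^y:=\sum_{\alpha=1}^{r_{L-1}}a^{L,y}_\alpha\cdot\phi^{L-1,\alpha}\otimes\phi^{L-1,\alpha}\otimes\phi^{L-1,\alpha}\otimes\phi^{L-1,\alpha},$$ a tensor of order $N$ with dimension $M$ in each mode. Let $(I,J)$ be a partition of $[N]$ and for $l\in\{0,\ldots,L-1\}$, $k\in[N/4^l]$ set $I_{l,k}:=\{i-(k-1)4^l: i\in I\}\cap[4^l]$ and $J_{l,k}:=\{j-(k-1)4^l:j\in J\}\cap[4^l]$. Then the maximum of $\operatorname{rank}[\![\mathcal{A}^y]\!]_{I,J}$ over all choices of the weights is: (i) no smaller than $\min\{r_0,M\}^S$, where $S:=|\{k\in[N/4]: I_{1,k}\neq\emptyset\text{ and }J_{1,k}\neq\emptyset\}|$;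 (ii) no greater than $\min\{M^{\min\{|I|,|J|\}},\ r_{L-1}\prod_{t=1}^4 c^{L-1,t}\}$, where $c^{0,k}:=1$ for $k\in[N]$ and $c^{l,k}:=\min\{M^{\min\{|I_{l,k}|,|J_{l,k}|\}},\ r_{l-1}\prod_{t=1}^4 c^{l-1,4(k-1)+t}\}$ for $l\in[L-1]$, $k\in[N/4^l]$.
   Context: $[n]=\{1,\ldots,n\}$. Tensor product: for tensors $\mathcal{A}$ of order $P$ and $\mathcal{B}$ of order $Q$, $(\mathcal{A}\otimes\mathcal{B})_{d_1\ldots d_{P+Q}}=\mathcal{A}_{d_1\ldots d_P}\mathcal{B}_{d_{P+1}\ldots d_{P+Q}}$; $a^{l,\gamma}_\alpha$ denotes entry $\alpha$ of $\mathbf{a}^{l,\gamma}$. Matricization: for a tensor $\mathcal{A}$ of order $N$ with dimension $M$ in each mode and a partition $(I,J)$ of $[N]$ (disjoint, union $[N]$) with $I=\{i_1<\cdots<i_{|I|}\}$, $J=\{j_1<\cdots<j_{|J|}\}$, $[\![\mathcal{A}]\!]_{I,J}$ is the $M^{|I|}\times M^{|J|}$ matrix holding $\mathcal{A}_{d_1\ldots d_N}$ in row $1+\sum_{t}(d_{i_t}-1)M^{|I|-t}$ and column $1+\sum_t(d_{j_t}-1)M^{|J|-t}$ (a row or column vector if $I$ or $J$ is empty). The tensor $\mathcal{A}^y$ is the coefficient tensor realized by output $y$ of a deep convolutional arithmetic circuit with size-4 pooling windows. *)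

(* Defs.v *)
From HB Require Import structures.
From mathcomp Require Import all_boot all_order all_algebra.
From mathcomp Require Import zify.
From mathcomp Require Import reals.
Set Implicit Arguments. Unset Strict Implicit. Unset Printing Implicit Defensive.
Import Order.TTheory GRing.Theory Num.Theory.
Local Open Scope ring_scope.

(* Indices are 0-based: mode i of an order-n tensor is i : 'I_n, an index
   value d_i lies in 'I_M (value d_i - 1 in the paper's 1-based convention). *)

Definition tensor (R : Type) (M n : nat) := {ffun 'I_n -> 'I_M} -> R.

Lemma blk_lt (l : nat) (t : 'I_4) (j : 'I_(4 ^ l)) : (t * 4 ^ l + j < 4 ^ l.+1)%N.
Proof.
rewrite expnS; have := ltn_ord t; have := ltn_ord j.
move: (nat_of_ord t) (nat_of_ord j) => a b; move: (4 ^ l)%N => x; nia.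
Qed.

Definition blk_ord (l : nat) (t : 'I_4) (j : 'I_(4 ^ l)) : 'I_(4 ^ l.+1) :=
  Ordinal (blk_lt t j).

Definition block (M l : nat) (d : {ffun 'I_(4 ^ l.+1) -> 'I_M}) (t : 'I_4)
  : {ffun 'I_(4 ^ l) -> 'I_M} := [ffun j => d (blk_ord t j)].

(* One layer: sum_alpha w_alpha . phi^alpha (x) phi^alpha (x) phi^alpha (x) phi^alpha,
   where (A (x) B)_{d_1..d_{P+Q}} = A_{d_1..d_P} B_{d_{P+1}..d_{P+Q}}, so the
   fourfold tensor power evaluates to the product over the 4 consecutive blocks. *)
Definition layer (R : realType) (M l rr : nat) (w : 'I_rr -> R)
  (phi : 'I_rr -> tensor R M (4 ^ l)) : tensor R M (4 ^ l.+1) :=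
  fun d => \sum_(alpha < rr) w alpha * \prod_(t < 4) phi alpha (block d t).

Definition ord0_pow0 : 'I_(4 ^ 0) := @Ordinal (4 ^ 0) 0 isT.

(* phi^{l,gamma}; a0 gamma = a^{0,gamma} in R^M, a l gamma = a^{l,gamma} in R^{r_{l-1}} *)
Fixpoint phi (R : realType) (M : nat) (r : nat -> nat)
  (a0 : 'I_(r 0%N) -> 'I_M -> R) (a : forall l : nat, 'I_(r l) -> 'I_(r l.-1) -> R)
  (l : nat) : 'I_(r l) -> tensor R M (4 ^ l) :=
  match l return 'I_(r l) -> tensor R M (4 ^ l) with
  | 0 => fun g d => a0 g (d ord0_pow0)
  | l'.+1 => fun g => layer (a l'.+1 g) (@phi R M r a0 a l')
  end.

(* A^y, with aL = a^{L,y} in R^{r_{L-1}} (meaningful for L >= 1) *)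
Definition Atensor (R : realType) (M : nat) (r : nat -> nat)
  (a0 : 'I_(r 0%N) -> 'I_M -> R) (a : forall l : nat, 'I_(r l) -> 'I_(r l.-1) -> R)
  (L : nat) (aL : 'I_(r L.-1) -> R) : tensor R M (4 ^ L) :=
  (match L return ('I_(r L.-1) -> R) -> tensor R M (4 ^ L) with
   | 0 => fun _ _ => 0
   | L'.+1 => fun w => layer w (@phi R M r a0 a L')
   end) aL.

Definition posn (n : nat) (I : {set 'I_n}) (i : 'I_n) : nat :=
  #|[set i' in I | (i' < i)%N]|.

Definition digit (M : nat) (HM : (0 < M)%N) (rho e : nat) : 'I_M :=
  Ordinal (ltn_pmod (rho %/ M ^ e) HM).

(* Matricization [[A]]_{I,J}: entry A_{d_1..d_N} sits in row
   sum_t d_{i_t} M^{|I|-t} and column sum_t d_{j_t} M^{|J|-t} (0-based). *)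
Definition matricize (R : realType) (M n : nat) (HM : (0 < M)%N)
  (I J : {set 'I_n}) (A : tensor R M n) : 'M[R]_(M ^ #|I|, M ^ #|J|) :=
  \matrix_(rho, kappa) A [ffun i : 'I_n =>
     if i \in I then digit HM rho (#|I| - 1 - posn I i)
     else digit HM kappa (#|J| - 1 - posn J i)].

(* I_{l,k} = {i - (k-1)4^l : i in I} cap [4^l], with k 0-based here *)
Definition Ilk (n : nat) (I : {set 'I_n}) (l k : nat) : {set 'I_(4 ^ l)} :=
  [set j : 'I_(4 ^ l) | [exists i in I, nat_of_ord i == (k * 4 ^ l + j)%N]].

(* c^{l,k} (k 0-based): c^{0,k} = 1,
   c^{l,k} = min(M^{min(|I_{l,k}|,|J_{l,k}|)}, r_{l-1} prod_t c^{l-1,4k+t}) *)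
Fixpoint cbound (n M : nat) (r : nat -> nat) (I J : {set 'I_n}) (l k : nat) : nat :=
  match l with
  | 0 => 1%N
  | l'.+1 => minn (M ^ minn #|Ilk I l'.+1 k| #|Ilk J l'.+1 k|)
                  (r l' * \prod_(t < 4) cbound M r I J l' (4 * k + t))%N
  end.

(* Main.v *)
Require Import Defs.
From HB Require Import structures.
From mathcomp Require Import all_boot all_order all_algebra.
From mathcomp Require Import zify.
From mathcomp Require Import reals.
Set Implicit Arguments. Unset Strict Implicit. Unset Printing Implicit Defensive.
Import Order.TTheory GRing.Theory Num.Theory.
Local Open Scope ring_scope.

Definition dep (R : realType) (M n : nat) (P : {set 'I_n}) (f : tensor R M n) :=
  forall d d' : {ffun 'I_n -> 'I_M}, (forall i, i \in P -> d i = d' i) -> f d = f d'.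

Definition sep (R : realType) (M n : nat) (P Q : {set 'I_n}) (T : tensor R M n) (m : nat) :=
  exists (K : finType) (f g : K -> tensor R M n), [/\ (#|K| <= m)%N,
    forall k, dep P (f k), forall k, dep Q (g k) &
    forall d, T d = \sum_k f k d * g k d].

Lemma sep_le (R : realType) M n (P Q : {set 'I_n}) (T : tensor R M n) m m' :
  sep P Q T m -> (m <= m')%N -> sep P Q T m'.
Proof.
move=> [K [f [g [h1 h2 h3 h4]]]] hm; exists K, f, g; split=> //.
exact: leq_trans hm.
Qed.

Lemma sep_sym (R : realType) M n (P Q : {set 'I_n}) (T : tensor R M n) m :
  sep P Q T m -> sep Q P T m.
Proof.
move=> [K [f [g [h1 h2 h3 h4]]]]; exists K, g, f; split=> // d.
by rewrite h4; apply: eq_bigr => k _; rewrite mulrC.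
Qed.

Lemma sep_min (R : realType) M n (P Q : {set 'I_n}) (T : tensor R M n) m1 m2 :
  sep P Q T m1 -> sep P Q T m2 -> sep P Q T (minn m1 m2).
Proof. by rewrite /minn; case: ltnP. Qed.

Lemma sep0 (R : realType) M n (P Q : {set 'I_n}) :
  sep P Q ((fun _ => 0) : tensor R M n) 0.
Proof.
exists void, (fun _ _ => 0), (fun _ _ => 0); split=> //.
- by rewrite card_void.
- by move=> d; rewrite big_pred0 // => -[].
Qed.

Lemma sep1 (R : realType) M n (P Q : {set 'I_n}) :
  sep P Q ((fun _ => 1) : tensor R M n) 1.
Proof.
exists unit, (fun _ _ => 1), (fun _ _ => 1); split=> //.
- by rewrite card_unit.
- by move=> d; rewrite (big_pred1 tt) ?mulr1 //; case.
Qed.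

Lemma sep_add (R : realType) M n (P Q : {set 'I_n}) (T1 T2 : tensor R M n) m1 m2 :
  sep P Q T1 m1 -> sep P Q T2 m2 -> sep P Q (fun d => T1 d + T2 d) (m1 + m2).
Proof.
move=> [K1 [f1 [g1 [a1 b1 c1 e1]]]] [K2 [f2 [g2 [a2 b2 c2 e2]]]].
exists (K1 + K2)%type, (fun k => match k with inl k => f1 k | inr k => f2 k end),
  (fun k => match k with inl k => g1 k | inr k => g2 k end); split.
- by rewrite card_sum leq_add.
- by case.
- by case.
- by move=> d; rewrite big_sumType /= e1 e2.
Qed.

Lemma sep_scale (R : realType) M n (P Q : {set 'I_n}) (T : tensor R M n) m (c : R) :
  sep P Q T m -> sep P Q (fun d => c * T d) m.
Proof.
move=> [K [f [g [a b e h]]]].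
exists K, (fun k d => c * f k d), g; split=> //.
- by move=> k d d' H; rewrite (b k d d' H).
- by move=> d; rewrite h mulr_sumr; apply: eq_bigr => k _; rewrite mulrA.
Qed.

Lemma sep_mul (R : realType) M n (P Q : {set 'I_n}) (T1 T2 : tensor R M n) m1 m2 :
  sep P Q T1 m1 -> sep P Q T2 m2 -> sep P Q (fun d => T1 d * T2 d) (m1 * m2).
Proof.
move=> [K1 [f1 [g1 [a1 b1 c1 e1]]]] [K2 [f2 [g2 [a2 b2 c2 e2]]]].
exists (K1 * K2)%type, (fun k d => f1 k.1 d * f2 k.2 d),
  (fun k d => g1 k.1 d * g2 k.2 d); split.
- by rewrite card_prod leq_mul.
- by move=> k d d' H; rewrite (b1 _ d d' H) (b2 _ d d' H).
- by move=> k d d' H; rewrite (c1 _ d d' H) (c2 _ d d' H).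
- move=> d; rewrite e1 e2 big_distrlr /= pair_big /=; apply: eq_bigr => k _.
  by rewrite mulrACA.
Qed.

Lemma sep_ext (R : realType) M n (P Q : {set 'I_n}) (T T' : tensor R M n) m :
  (forall d, T d = T' d) -> sep P Q T m -> sep P Q T' m.
Proof.
move=> E [K [f [g [a b e h]]]]; exists K, f, g; split=> // d.
by rewrite -E h.
Qed.

Lemma sep_sum (R : realType) M n (P Q : {set 'I_n}) (I : Type) (s : seq I)
  (F : I -> tensor R M n) m :
  (forall i, sep P Q (F i) m) -> sep P Q (fun d => \sum_(i <- s) F i d) (size s * m).
Proof.
move=> H; elim: s => [|i s IH].
  by apply: (sep_ext _ (sep0 R M P Q)) => d; rewrite big_nil.
by apply: sep_ext (sep_add (H i) IH) => d; rewrite big_cons.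
Qed.

Lemma sep_prod (R : realType) M n (P Q : {set 'I_n}) (I : Type) (s : seq I)
  (F : I -> tensor R M n) (m : I -> nat) :
  (forall i, sep P Q (F i) (m i)) ->
  sep P Q (fun d => \prod_(i <- s) F i d) (\prod_(i <- s) m i)%N.
Proof.
move=> H; elim: s => [|i s IH].
  rewrite big_nil; apply: (sep_ext _ (sep1 R M P Q)) => d; by rewrite big_nil.
by rewrite big_cons; apply: sep_ext (sep_mul (H i) IH) => d; rewrite big_cons.
Qed.

Definition upd (M n : nat) (d : {ffun 'I_n -> 'I_M}) (i : 'I_n) (v : 'I_M) :
  {ffun 'I_n -> 'I_M} := [ffun j => if j == i then v else d j].

Lemma upd_id M n (d : {ffun 'I_n -> 'I_M}) i : upd d i (d i) = d.
Proof. by apply/ffunP => j; rewrite ffunE; case: eqP => // ->. Qed.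

Lemma sep_seq (R : realType) M n (T : tensor R M n) (s : seq 'I_n) :
  sep [set j in s] (~: [set j in s]) T (M ^ size s).
Proof.
elim: s => [|i s IH].
  exists unit, (fun _ _ => 1), (fun _ => T); split=> //.
  - by rewrite card_unit.
  - move=> _ d d' H; congr T; apply/ffunP => j; apply: H.
    by rewrite !inE.
  - move=> d; rewrite (big_pred1 tt) ?mul1r // => -[].
move: IH => [K [f [g [a b e h]]]].
exists (K * 'I_M)%type, (fun k d => f k.1 d * ((d i == k.2)%:R)),
  (fun k d => g k.1 (upd d i k.2)); split.
- by rewrite card_prod card_ord /= expnS mulnC leq_mul.
- move=> [k v] d d' H /=; rewrite (H i); last by rewrite !inE eqxx.
  congr (_ * _); apply: b => j hj; apply: H; move: hj; rewrite !inE => ->.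
  by rewrite orbT.
- move=> [k v] d d' H /=; apply: e => j; rewrite !ffunE.
  case: eqP => // hji; rewrite !inE => hj; apply: H.
  by rewrite !inE negb_or hj andbT; apply/eqP.
- move=> d; rewrite h -(pair_bigA _ (fun k v => f k d * (d i == v)%:R * g k (upd d i v))) /=; apply: eq_bigr => k _.
  rewrite (bigD1 (d i)) //= eqxx mulr1 upd_id big1 ?addr0 //.
  by move=> v hv; rewrite eq_sym (negbTE hv) mulr0 mul0r.
Qed.

Lemma dep_mono (R : realType) M n (P P' : {set 'I_n}) (f : tensor R M n) :
  P \subset P' -> dep P f -> dep P' f.
Proof.
move=> /subsetP sP H d d' E; apply: H => i hi; exact: E (sP _ hi).
Qed.

Lemma sep_mono (R : realType) M n (P Q P' Q' : {set 'I_n}) (T : tensor R M n) m :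
  P \subset P' -> Q \subset Q' -> sep P Q T m -> sep P' Q' T m.
Proof.
move=> s1 s2 [K [f [g [a b e h]]]]; exists K, f, g; split=> // k.
  exact: dep_mono (b k).
exact: dep_mono (e k).
Qed.

Lemma sep_full (R : realType) M n (P Q : {set 'I_n}) (T : tensor R M n) :
  (forall i, (i \in P) || (i \in Q)) -> sep P Q T (M ^ #|P|).
Proof.
move=> cov; rewrite cardE; apply: sep_mono (sep_seq T (enum P)).
  by apply/subsetP => i; rewrite inE mem_enum.
apply/subsetP => i; rewrite !inE mem_enum; move: (cov i); by case: (i \in P).
Qed.

Lemma sep_fullM (R : realType) M n (P Q : {set 'I_n}) (T : tensor R M n) :
  (forall i, (i \in P) || (i \in Q)) -> sep P Q T (M ^ minn #|P| #|Q|).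
Proof.
move=> cov.
have h1 := sep_full T cov.
have h2 : sep P Q T (M ^ #|Q|).
  apply: sep_sym; apply: sep_full => i; by rewrite orbC.
by rewrite /minn; case: ltnP.
Qed.

Lemma sep_rank (R : realType) M n (HM : (0 < M)%N) (I J : {set 'I_n})
  (disj : [disjoint I & J]) (T : tensor R M n) m :
  sep I J T m -> (\rank (matricize HM I J T) <= m)%N.
Proof.
move=> [K [f [g [a b e h]]]].
pose dd (rho : 'I_(M ^ #|I|)) (kappa : 'I_(M ^ #|J|)) : {ffun 'I_n -> 'I_M} :=
  [ffun i : 'I_n =>
     if i \in I then digit HM rho (#|I| - 1 - posn I i)
     else digit HM kappa (#|J| - 1 - posn J i)].
have r0 : (0 < M ^ #|I|)%N by rewrite expn_gt0 HM.
have k0 : (0 < M ^ #|J|)%N by rewrite expn_gt0 HM.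
pose B : 'M[R]_(M ^ #|I|, #|K|) := \matrix_(rho, k) f (enum_val k) (dd rho (Ordinal k0)).
pose C : 'M[R]_(#|K|, M ^ #|J|) := \matrix_(k, kappa) g (enum_val k) (dd (Ordinal r0) kappa).
have -> : matricize HM I J T = B *m C.
  apply/matrixP => rho kappa; rewrite !mxE h.
  have -> : \sum_k f k (dd rho kappa) * g k (dd rho kappa) =
     \sum_(i < #|K|) f (enum_val i) (dd rho kappa) * g (enum_val i) (dd rho kappa).
    by rewrite -(big_enum_val (fun k => f k (dd rho kappa) * g k (dd rho kappa))); apply: eq_bigl => k; rewrite inE.
  apply: eq_bigr => k _; rewrite !mxE.
  congr (_ * _).
    apply: b => i hi; rewrite !ffunE hi //.
  apply: e => i hi; rewrite !ffunE.
  by rewrite (disjointFl disj hi).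
apply: leq_trans (mxrankM_maxl _ _) _.
exact: leq_trans (rank_leq_col _) a.
Qed.

Lemma sep_single (R : realType) M n (P Q : {set 'I_n}) (T : tensor R M n) :
  dep P T -> sep P Q T 1.
Proof.
move=> H; exists unit, (fun _ => T), (fun _ _ => 1); split=> //.
- by rewrite card_unit.
- move=> d; rewrite (big_pred1 tt) ?mulr1 // => -[].
Qed.

Lemma sep_block (R : realType) M l (t : 'I_4) (P' Q' : {set 'I_(4 ^ l)})
  (P Q : {set 'I_(4 ^ l.+1)}) (U : tensor R M (4 ^ l)) m :
  sep P' Q' U m -> (forall j, j \in P' -> blk_ord t j \in P) ->
  (forall j, j \in Q' -> blk_ord t j \in Q) ->
  sep P Q (fun d => U (block d t)) m.
Proof.
move=> [K [f [g [a b e h]]]] HP HQ.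
exists K, (fun k d => f k (block d t)), (fun k d => g k (block d t)); split=> //.
- move=> k d d' H; apply: b => j hj; rewrite !ffunE; exact: H (HP _ hj).
- move=> k d d' H; apply: e => j hj; rewrite !ffunE; exact: H (HQ _ hj).
Qed.

Lemma size_index_enum_ord n : size (index_enum 'I_n) = n.
Proof. by rewrite -[X in _ = X]card_ord cardT enumT /index_enum [locked_with _ _]unlock. Qed.

Lemma sep_layer (R : realType) M l rr (w : 'I_rr -> R) (U : 'I_rr -> tensor R M (4 ^ l))
  (P' Q' : 'I_4 -> {set 'I_(4 ^ l)}) (m : 'I_4 -> nat) (P Q : {set 'I_(4 ^ l.+1)}) :
  (forall al t, sep (P' t) (Q' t) (U al) (m t)) ->
  (forall t j, j \in P' t -> blk_ord t j \in P) ->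
  (forall t j, j \in Q' t -> blk_ord t j \in Q) ->
  sep P Q (layer w U) (rr * \prod_(t < 4) m t).
Proof.
move=> H HP HQ.
have := @sep_sum R M _ P Q _ (index_enum 'I_rr)
  (fun al d => w al * \prod_(t < 4) U al (block d t)) (\prod_(t < 4) m t).
rewrite size_index_enum_ord; apply=> al.
apply: sep_scale.
apply: (@sep_prod R M _ P Q _ (index_enum 'I_4) (fun t d => U al (block d t)) m) => t.
exact: sep_block (H al t) (HP t) (HQ t).
Qed.

Lemma Ilk_cover L (I J : {set 'I_(4 ^ L)}) (HIJcov : I :|: J = [set: 'I_(4 ^ L)]) l k :
  (k.+1 * 4 ^ l <= 4 ^ L)%N ->
  forall j : 'I_(4 ^ l), (j \in Ilk I l k) || (j \in Ilk J l k).
Proof.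
move=> hk j.
have hi : (k * 4 ^ l + j < 4 ^ L)%N.
  apply: leq_trans hk; rewrite mulSn addnC ltn_add2r; exact: ltn_ord.
pose i := Ordinal hi.
have : i \in I :|: J by rewrite HIJcov inE.
rewrite inE => /orP [hI|hJ].
  by apply/orP; left; rewrite inE; apply/existsP; exists i; rewrite hI /=.
by apply/orP; right; rewrite inE; apply/existsP; exists i; rewrite hJ /=.
Qed.

Lemma Ilk_blk L (I : {set 'I_(4 ^ L)}) l k (t : 'I_4) (j : 'I_(4 ^ l)) :
  j \in Ilk I l (4 * k + t) -> blk_ord t j \in Ilk I l.+1 k.
Proof.
rewrite !inE => /existsP [i /andP [hi /eqP hij]].
apply/existsP; exists i; rewrite hi /=; apply/eqP; rewrite hij /= expnS.
move: (nat_of_ord j) (nat_of_ord t) => y z; move: (4 ^ l)%N => x; nia.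
Qed.

Lemma Ilk_top L (I : {set 'I_(4 ^ L.+1)}) (t : 'I_4) (j : 'I_(4 ^ L)) :
  j \in Ilk I L t -> blk_ord t j \in I.
Proof.
rewrite !inE => /existsP [i /andP [hi /eqP hij]].
by have -> : blk_ord t j = i by apply: val_inj; rewrite /= hij.
Qed.

Lemma phi_sep (R : realType) L M (r : nat -> nat) (I J : {set 'I_(4 ^ L)})
  (HIJcov : I :|: J = [set: 'I_(4 ^ L)])
  (a0 : 'I_(r 0%N) -> 'I_M -> R) (a : forall l : nat, 'I_(r l) -> 'I_(r l.-1) -> R) l :
  forall k, (k.+1 * 4 ^ l <= 4 ^ L)%N -> forall g : 'I_(r l),
  sep (Ilk I l k) (Ilk J l k) (@phi R M r a0 a l g) (cbound M r I J l k).
Proof.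
elim: l => [|l IH] k hk g.
  have cov := Ilk_cover HIJcov hk ord0_pow0.
  case/orP: cov => h.
    apply: sep_single => d d' H /=; by rewrite (H _ h).
  apply: sep_sym; apply: sep_single => d d' H /=; by rewrite (H _ h).
rewrite /=; apply: sep_min.
  apply: sep_fullM; exact: (Ilk_cover HIJcov hk).
apply: (@sep_layer _ _ _ _ _ _ (fun t => Ilk I l (4 * k + t)) (fun t => Ilk J l (4 * k + t))).
- move=> al t; apply: IH.
  apply: leq_trans hk; rewrite expnS; have := ltn_ord t.
  move: (4 ^ l)%N (nat_of_ord t) => x y; nia.
- move=> t j; exact: Ilk_blk.
- move=> t j; exact: Ilk_blk.
Qed.

Theorem upper (R : realType) (L M : nat) (r : nat -> nat)
  (HL : (1 <= L)%N) (HM : (0 < M)%N)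
  (I J : {set 'I_(4 ^ L)})
  (HIJdisj : [disjoint I & J]) (HIJcov : I :|: J = [set: 'I_(4 ^ L)])
  (a0 : 'I_(r 0%N) -> 'I_M -> R)
  (a : forall l : nat, 'I_(r l) -> 'I_(r l.-1) -> R)
  (aL : 'I_(r L.-1) -> R) :
      (\rank (matricize HM I J (Atensor a0 a aL)) <=
       minn (M ^ minn #|I| #|J|)
            (r L.-1 * \prod_(t < 4) cbound M r I J L.-1 t))%N.
Proof.
rewrite leq_min; apply/andP; split.
  rewrite /minn; case: ltnP => _; [exact: rank_leq_row|exact: rank_leq_col].
apply: sep_rank => //.
case: L HL I J HIJdisj HIJcov aL => // L _ I J HIJdisj HIJcov aL /=.
apply: (@sep_layer _ _ _ _ _ _ (fun t => Ilk I L t) (fun t => Ilk J L t)).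
- move=> al t; apply: phi_sep => //.
  rewrite expnS; have := ltn_ord t; move: (4 ^ L)%N (nat_of_ord t) => x y; nia.
- move=> t j; exact: Ilk_top.
- move=> t j; exact: Ilk_top.
Qed.
Lemma posn_lt n (I : {set 'I_n}) i : i \in I -> (posn I i < #|I|)%N.
Proof.
move=> hi; rewrite /posn; apply: proper_card; apply/properP; split.
  by apply/subsetP => x; rewrite inE => /andP [].
by exists i => //; rewrite inE ltnn andbF.
Qed.

Lemma posn_inj n (I : {set 'I_n}) i i' : i \in I -> i' \in I -> posn I i = posn I i' -> i = i'.
Proof.
have key : forall x y, x \in I -> y \in I -> (x < y)%N -> (posn I x < posn I y)%N.
  move=> x y hx hy hxy; rewrite /posn; apply: proper_card; apply/properP; split.
    apply/subsetP => z; rewrite !inE => /andP [-> hz] /=; exact: ltn_trans hz hxy.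
  by exists x; rewrite !inE ?hx ?hxy ?ltnn ?andbF.
move=> hi hi' hp; apply: val_inj => /=.
case: (ltngtP i i') => // h.
  by have := key _ _ hi hi' h; rewrite hp ltnn.
by have := key _ _ hi' hi h; rewrite hp ltnn.
Qed.

Lemma digits_inj M (HM : (0 < M)%N) k : forall a b, (a < M ^ k)%N -> (b < M ^ k)%N ->
  (forall e, (e < k)%N -> nat_of_ord (digit HM a e) = digit HM b e) -> a = b.
Proof.
elim: k => [|k IH] a b ha hb H.
  by move: ha hb; rewrite expn0 !ltnS !leqn0 => /eqP -> /eqP ->.
rewrite (divn_eq a M) (divn_eq b M).
have h0 := H 0%N isT; rewrite /= !expn0 !divn1 in h0.
rewrite h0; congr (_ * _ + _)%N; apply: IH.
- by rewrite ltn_divLR // -expnSr.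
- by rewrite ltn_divLR // -expnSr.
- move=> e he; have := H e.+1 he; rewrite /= expnSr !divnMA.
  by rewrite /digit /= -!divnMA mulnC.
Qed.

Lemma posn_onto n (I : {set 'I_n}) e : (e < #|I|)%N ->
  exists2 i, i \in I & (#|I| - 1 - posn I i)%N = e.
Proof.
move=> he.
pose ps (s : {i : 'I_n | i \in I}) : 'I_#|I| := Ordinal (posn_lt (valP s)).
have inj : injective ps.
  move=> s s' /(congr1 val) /= h; apply: val_inj; exact: posn_inj (valP s) (valP s') h.
have hp : (#|I| - 1 - e < #|I|)%N by lia.
have hc : (#|{: 'I_#|I| }| <= #|{: {i : 'I_n | i \in I} }|)%N.
  by rewrite card_ord card_sig; apply: eq_leq; apply: eq_card => z; rewrite inE.
have := inj_card_onto inj hc (Ordinal hp).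
move=> /codomP [s /(congr1 val) /= hs].
exists (val s); first exact: valP.
rewrite -hs; move: he; move: #|I| => c; lia.
Qed.

Lemma digits_onto M (HM : (0 < M)%N) n (I : {set 'I_n}) (x : 'I_n -> nat) :
  (forall i, (x i < M)%N) ->
  exists rho : 'I_(M ^ #|I|), forall i, i \in I ->
    nat_of_ord (digit HM rho (#|I| - 1 - posn I i)) = x i.
Proof.
move=> hx.
pose phi (rho : 'I_(M ^ #|I|)) : {ffun {i : 'I_n | i \in I} -> 'I_M} :=
  [ffun s => digit HM rho (#|I| - 1 - posn I (val s))].
have inj : injective phi.
  move=> a b hab; apply: val_inj; apply: (@digits_inj M HM #|I|); [exact: ltn_ord|exact: ltn_ord|move=> e he].
  have [i hi hie] := posn_onto he.
  move/ffunP: hab => /(_ (Sub i hi)); rewrite !ffunE /= hie.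
  by move=> /(congr1 val).
pose y : {ffun {i : 'I_n | i \in I} -> 'I_M} := [ffun s => Ordinal (hx (val s))].
have hc : (#|{: {ffun {i : 'I_n | i \in I} -> 'I_M} }| <= #|{: 'I_(M ^ #|I|)}|)%N.
  rewrite card_ffun !card_ord card_sig; apply: eq_leq; congr (expn _ _).
have := inj_card_onto inj hc y.
move=> /codomP [rho hrho].
exists rho => i hi.
move/ffunP: hrho => /(_ (Sub i hi)); rewrite !ffunE /=.
by move=> /(congr1 val).
Qed.

Definition good (M r0 n : nat) (d : {ffun 'I_n -> 'I_M}) : bool :=
  [forall i : 'I_n, forall j : 'I_n, ((i : nat) %/ 4 == (j : nat) %/ 4)%N ==> (d i == d j)] && [forall i, (d i < r0)%N].

Definition wt (R : realType) (l al : nat) : R := if l == 1%N then 1 else (al == 0%N)%:R.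

Definition a0w (R : realType) (M : nat) (r : nat -> nat) : 'I_(r 0%N) -> 'I_M -> R :=
  fun g v => ((g : nat) == v)%:R.
Definition aw (R : realType) (r : nat -> nat) : forall l : nat, 'I_(r l) -> 'I_(r l.-1) -> R :=
  fun l g al => wt R l al.

Lemma prod_bool (R : realType) (T : finType) (b : T -> bool) :
  \prod_(t : T) ((b t)%:R : R) = [forall t, b t]%:R.
Proof.
case: (boolP [forall t, b t]) => h.
  by rewrite big1 // => t _; move/forallP: h => /(_ t) ->.
move: h; rewrite negb_forall => /existsP [t ht].
by rewrite (bigD1 t) //= (negbTE ht) mul0r.
Qed.

Lemma blk_surj l (i : 'I_(4 ^ l.+1)) : exists t j, i = blk_ord (l := l) t j.
Proof.
have ht : (i %/ 4 ^ l < 4)%N by rewrite ltn_divLR ?expn_gt0 // -expnS.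
have hj : (i %% 4 ^ l < 4 ^ l)%N by rewrite ltn_pmod ?expn_gt0.
exists (Ordinal ht), (Ordinal hj); apply: val_inj => /=; exact: divn_eq.
Qed.

Lemma blk_div4 l (t : 'I_4) (j : 'I_(4 ^ l.+1)) :
  (blk_ord t j %/ 4 = t * 4 ^ l + j %/ 4)%N.
Proof. rewrite /=; move: (nat_of_ord j) => x; by rewrite expnSr mulnA divnMDl. Qed.

Lemma good_block M r0 l (d : {ffun 'I_(4 ^ l.+2) -> 'I_M}) :
  good r0 d = [forall t, good r0 (block d t)].
Proof.
apply/idP/idP.
  move=> /andP [/forallP H1 /forallP H2]; apply/forallP => t; apply/andP; split.
    apply/forallP => i; apply/forallP => j; apply/implyP => hij.
    rewrite !ffunE; move/forallP: (H1 (blk_ord t i)) => /(_ (blk_ord t j)) /implyP.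
    by apply; rewrite !blk_div4 (eqP hij).
  by apply/forallP => i; rewrite ffunE.
move/forallP => H; apply/andP; split.
  apply/forallP => i; apply/forallP => j.
  have [ti [ji ->]] := blk_surj i; have [tj [jj ->]] := blk_surj j.
  apply/implyP => /eqP; rewrite !blk_div4.
  have hi4 : (ji %/ 4 < 4 ^ l)%N by rewrite ltn_divLR // -expnSr.
  have hj4 : (jj %/ 4 < 4 ^ l)%N by rewrite ltn_divLR // -expnSr.
  move=> e.
  have et : ti = tj.
    apply: val_inj; have := congr1 (fun x => x %/ 4 ^ l)%N e.
    have h4 : (0 < 4 ^ l)%N by rewrite expn_gt0.
    rewrite /= !divnMDl // (divn_small hi4) (divn_small hj4) => h; change (nat_of_ord ti = nat_of_ord tj); lia.
  have ej : (ji %/ 4 = jj %/ 4)%N by move: e; rewrite et => /addnI.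
  subst tj; move/andP: (H ti) => [/forallP H1 _].
  move/forallP: (H1 ji) => /(_ jj) /implyP; rewrite !ffunE; apply.
  by rewrite ej.
apply/forallP => i; have [t [j ->]] := blk_surj i.
move/andP: (H t) => [_ /forallP /(_ j)]; by rewrite ffunE.
Qed.

Lemma blk_surj0 (i : 'I_(4 ^ 1)) : exists t, i = blk_ord (l := 0) t ord0_pow0.
Proof.
have [t [j ->]] := blk_surj i; exists t.
by congr blk_ord; apply: val_inj; case: j => x hx /=; case: x hx.
Qed.

Lemma good1 M r0 (d : {ffun 'I_(4 ^ 1) -> 'I_M}) :
  good r0 d = [forall t : 'I_4, d (blk_ord t ord0_pow0) == d (blk_ord ord0 ord0_pow0)]
              && (d (blk_ord ord0 ord0_pow0) < r0)%N.
Proof.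
have d0 : forall i : 'I_(4 ^ 1), (i %/ 4 = 0)%N by move=> i; apply: divn_small; exact: ltn_ord.
apply/idP/idP.
  move=> /andP [/forallP H1 /forallP H2]; rewrite H2 andbT; apply/forallP => t.
  by move/forallP: (H1 (blk_ord t ord0_pow0)) => /(_ (blk_ord ord0 ord0_pow0)) /implyP; apply; rewrite !d0.
move=> /andP [/forallP H1 H2]; apply/andP; split.
  apply/forallP => i; apply/forallP => j; apply/implyP => _.
  have [ti ->] := blk_surj0 i; have [tj ->] := blk_surj0 j.
  by rewrite (eqP (H1 ti)) (eqP (H1 tj)).
apply/forallP => i; have [ti ->] := blk_surj0 i; by rewrite (eqP (H1 ti)).
Qed.

Lemma layer1 (R : realType) M (r : nat -> nat) (d : {ffun 'I_(4 ^ 1) -> 'I_M}) :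
  layer (fun al => wt R 1 al) (@phi R M r (@a0w R M r) (@aw R r) 0) d = (good (r 0%N) d)%:R.
Proof.
rewrite /layer good1.
set x0 := d (blk_ord ord0 ord0_pow0).
set c := [forall t : 'I_4, d (blk_ord t ord0_pow0) == x0].
transitivity (\sum_(al < r 0%N) (((al : nat) == x0) && c)%:R : R).
  apply: eq_bigr => al _; rewrite /wt /= mul1r.
  have -> : \prod_(t < 4) @phi R M r (@a0w R M r) (@aw R r) 0 al (block d t) =
            \prod_(t < 4) ((((al : nat) == d (blk_ord t ord0_pow0)))%:R : R).
    by apply: eq_bigr => t _; rewrite /= /a0w ffunE.
  rewrite (prod_bool R (fun t : 'I_4 => (al : nat) == d (blk_ord t ord0_pow0))).
  congr (_%:R); congr (nat_of_bool _); apply/idP/idP.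
    move/forallP => H; have e0 := eqP (H ord0); rewrite -/x0 in e0.
    rewrite e0 eqxx /=; apply/forallP => t; apply/eqP; apply: val_inj; by rewrite /= -(eqP (H t)) e0.
  move=> /andP [/eqP -> /forallP H]; apply/forallP => t; by rewrite (eqP (H t)).
rewrite andbC; case: c; last by rewrite andbF big1 // => al _; rewrite andbF.
rewrite andbT; case: (ltnP x0 (r 0%N)) => hx.
  rewrite (bigD1 (Ordinal hx)) //= eqxx big1 ?addr0 // => al hal.
  case: eqP => // e; move: hal; by rewrite -(inj_eq val_inj) /= e eqxx.
by rewrite big1 // => al _; case: eqP => // e; have := ltn_ord al; rewrite e ltnNge hx.
Qed.

Lemma layer_good (R : realType) M (r : nat -> nat) L (Hr : forall l, (l < L)%N -> (0 < r l)%N) :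
  forall l, (l < L)%N -> forall d : {ffun 'I_(4 ^ l.+1) -> 'I_M},
  layer (fun al => wt R l.+1 al) (@phi R M r (@a0w R M r) (@aw R r) l) d = (good (r 0%N) d)%:R.
Proof.
elim=> [|l IH] hl d; first exact: layer1.
have hr := Hr l.+1 hl.
rewrite /layer (bigD1 (Ordinal hr)) //= [X in _ + X]big1 ?addr0; last first.
  move=> al hal; rewrite /wt /=; case: eqP => [e|_]; last by rewrite mul0r.
  by move: hal; rewrite -(inj_eq val_inj) /= e eqxx.
rewrite /wt /= mul1r good_block -prod_bool; apply: eq_bigr => t _.
exact: (IH (ltnW hl)).
Qed.

Lemma Atensor_good (R : realType) M (r : nat -> nat) L (HL : (1 <= L)%N)
  (Hr : forall l, (l < L)%N -> (0 < r l)%N) (d : {ffun 'I_(4 ^ L) -> 'I_M}) :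
  Atensor (@a0w R M r) (@aw R r) (fun al => wt R L al) d = (good (r 0%N) d)%:R.
Proof.
case: L HL Hr d => [//|L] _ Hr d /=; exact: (@layer_good R M r L.+1 Hr L (ltnSn L) d).
Qed.

Lemma rank_sub (R : fieldType) m n p q (A : 'M[R]_(m, n)) (f : 'I_p -> 'I_m) (g : 'I_q -> 'I_n) :
  (\rank (\matrix_(i, j) A (f i) (g j)) <= \rank A)%N.
Proof.
have -> : \matrix_(i, j) A (f i) (g j) =
   (\matrix_(i, k) ((f i == k)%:R : R)) *m A *m (\matrix_(k, j) ((k == g j)%:R : R)).
  apply/matrixP => i j; rewrite !mxE (bigD1 (g j)) //= big1 ?addr0; last first.
    by move=> k hk; rewrite !mxE (negbTE hk) mulr0.
  rewrite !mxE eqxx mulr1 (bigD1 (f i)) //= big1 ?addr0; last first.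
    by move=> k hk; rewrite !mxE eq_sym (negbTE hk) mul0r.
  by rewrite !mxE eqxx mul1r.
exact: leq_trans (mxrankM_maxl _ _) (mxrankM_maxr _ _).
Qed.

Lemma div4_aux k (j : 'I_(4 ^ 1)) : ((k * 4 ^ 1 + j) %/ 4 = k)%N.
Proof.
have := ltn_ord j; move: (nat_of_ord j) => x hx.
by rewrite expn1 divnMDl // divn_small ?addn0.
Qed.

Theorem lower (R : realType) (L M : nat) (r : nat -> nat)
  (HL : (1 <= L)%N) (HM : (0 < M)%N) (Hr : forall l, (l < L)%N -> (0 < r l)%N)
  (I J : {set 'I_(4 ^ L)})
  (HIJdisj : [disjoint I & J]) (HIJcov : I :|: J = [set: 'I_(4 ^ L)]) :
  (minn (r 0%N) M ^ #|[set k : 'I_(4 ^ L %/ 4) |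
               (Ilk I 1 k != set0) && (Ilk J 1 k != set0)]|
   <= \rank (matricize HM I J (Atensor (@a0w R M r) (@aw R r) (fun al => wt R L al))))%N.
Proof.
set Sset := [set k : 'I_(4 ^ L %/ 4) | _].
set m := minn (r 0%N) M.
have r0 := Hr 0%N HL.
have mpos : (0 < m)%N by rewrite leq_min r0 HM.
have mM : (m <= M)%N by rewrite geq_minr.
have mr : (m <= r 0%N)%N by rewrite geq_minl.
pose sT := {k : 'I_(4 ^ L %/ 4) | k \in Sset}.
pose Q := {ffun sT -> 'I_m}.
have cardQ : #|{: Q}| = (m ^ #|Sset|)%N.
  rewrite card_ffun card_ord card_sig; congr (expn _ _).
pose nv (q : Q) (k : 'I_(4 ^ L %/ 4)) : nat :=
  if @insub _ _ sT k is Some s then nat_of_ord (q s) else 0%N.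
have nv_lt : forall q k, (nv q k < m)%N.
  by move=> q k; rewrite /nv; case: insub => [s|] //; exact: ltn_ord.
have L4 : (4 ^ L = 4 * 4 ^ L.-1)%N by case: L HL {Hr HIJdisj HIJcov I J Sset sT Q cardQ nv nv_lt} => // L _; rewrite expnS.
have gk_lt : forall i : 'I_(4 ^ L), ((i : nat) %/ 4 < 4 ^ L %/ 4)%N.
  move=> i; rewrite {2}L4 mulKn // ltn_divLR // mulnC -L4; exact: ltn_ord.
pose gk (i : 'I_(4 ^ L)) := Ordinal (gk_lt i).
have rowex : forall q : Q, exists rho : 'I_(M ^ #|I|), forall i, i \in I ->
    nat_of_ord (digit HM rho (#|I| - 1 - posn I i)) = nv q (gk i).
  move=> q; apply: digits_onto => i; exact: leq_trans (nv_lt q _) mM.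
have colex : forall q : Q, exists kappa : 'I_(M ^ #|J|), forall i, i \in J ->
    nat_of_ord (digit HM kappa (#|J| - 1 - posn J i)) = nv q (gk i).
  move=> q; apply: digits_onto => i; exact: leq_trans (nv_lt q _) mM.
have [fr hfr] := fin_all_exists rowex.
have [fc hfc] := fin_all_exists colex.
set A := matricize HM I J _.
have S1 : \matrix_(v < #|{: Q}|, w < #|{: Q}|) A (fr (enum_val v)) (fc (enum_val w)) = 1%:M.
  apply/matrixP => v w; rewrite !mxE Atensor_good //; congr (_ *+ nat_of_bool _).
  set D := [ffun i => _].
  have hD : forall i, nat_of_ord (D i) =
      (if i \in I then nv (enum_val v) (gk i) else nv (enum_val w) (gk i)).
    move=> i; rewrite ffunE; case: ifP => hi; first exact: hfr.
    apply: hfc; have : i \in I :|: J by rewrite HIJcov inE.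
    by rewrite inE hi.
  apply/idP/idP.
    move=> /andP [/forallP H1 _]; apply/eqP; apply: enum_val_inj; apply/ffunP => s.
    apply: val_inj.
    have hs := valP s; rewrite inE in hs; case/andP: hs => /set0Pn [j1 hj1] /set0Pn [j2 hj2].
    move: hj1 hj2; rewrite !inE => /existsP [i1 /andP [hi1 /eqP e1]] /existsP [i2 /andP [hi2 /eqP e2]].
    have g1 : gk i1 = val s.
      apply: val_inj; rewrite /= e1; exact: div4_aux.
    have g2 : gk i2 = val s.
      apply: val_inj; rewrite /= e2; exact: div4_aux.
    have := H1 i1; move/forallP => /(_ i2) /implyP.
    have eq4 : ((i1 : nat) %/ 4 == (i2 : nat) %/ 4)%N.
      by have := congr1 val g1; have := congr1 val g2; rewrite /= => -> ->.
    move=> /(_ eq4) /eqP /(congr1 (@nat_of_ord M)); rewrite !hD hi1 (disjointFl HIJdisj hi2) g1 g2.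
    rewrite /nv; have -> : @insub _ _ sT (val s) = Some s by apply: valK.
    by [].
  move/eqP => vw; subst w; apply/andP; split.
    apply/forallP => i; apply/forallP => j; apply/implyP => /eqP e.
    have ge : gk i = gk j by apply: val_inj.
    apply/eqP; apply: val_inj; change (nat_of_ord (D i) = nat_of_ord (D j)); rewrite !hD ge; by case: ifP; case: ifP.
  apply/forallP => i; rewrite hD; case: ifP => _; exact: leq_trans (nv_lt _ _) mr.
rewrite -cardQ.
have := rank_sub A (fun v : 'I_#|{: Q}| => fr (enum_val v)) (fun w : 'I_#|{: Q}| => fc (enum_val w)).
by rewrite S1 mxrank1.
Qed.

Unset Implicit Arguments.
Set Strict Implicit.

Theorem theorem1 (R : realType) (L M : nat) (r : nat -> nat)
  (HL : (1 <= L)%N) (HM : (0 < M)%N) (Hr : forall l, (l < L)%N -> (0 < r l)%N)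
  (I J : {set 'I_(4 ^ L)})
  (HIJdisj : [disjoint I & J]) (HIJcov : I :|: J = [set: 'I_(4 ^ L)]) :
  let S := #|[set k : 'I_(4 ^ L %/ 4) |
               (Ilk I 1 k != set0) && (Ilk J 1 k != set0)]| in
  (exists (a0 : 'I_(r 0%N) -> 'I_M -> R)
          (a : forall l : nat, 'I_(r l) -> 'I_(r l.-1) -> R)
          (aL : 'I_(r L.-1) -> R),
      (minn (r 0) M ^ S <= \rank (matricize HM I J (Atensor a0 a aL)))%N)
  /\
  (forall (a0 : 'I_(r 0%N) -> 'I_M -> R)
          (a : forall l : nat, 'I_(r l) -> 'I_(r l.-1) -> R)
          (aL : 'I_(r L.-1) -> R),
      (\rank (matricize HM I J (Atensor a0 a aL)) <=
       minn (M ^ minn #|I| #|J|)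
            (r L.-1 * \prod_(t < 4) cbound M r I J L.-1 t))%N).
Proof.
move=> S; split.
  exists (@a0w R M r), (@aw R r), (fun al => wt R L al).
  exact: lower.
move=> a0 a aL; exact: upper.
Qed.
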